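(* Let $\mu:\mathbb{N}\to\mathbb{R}$ with increments $\gamma(n)=\mu(n+1)-\mu(n)$ satisfying $\gamma(n)\ge0$ and $\gamma(n+1)\le\gamma(n)$ for all $n\in\mathbb{N}$. Let $T,N,h$ be integers with $N\ge2$, $N\le T-1$ and $1\le h\le\lfloor N/2\rfloor$, and define $$\widetilde\mu^T=\frac1h\sum_{l=N-h+1}^{N}\Big(\mu(l)+(T-l)\frac{\mu(l)-\mu(l-h)}{h}\Big).$$ Then $\widetilde\mu^T\ge\mu(T)$ and $$\widetilde\mu^T-\mu(T)\le\frac12(2T-2N+h-1)\,\gamma(N-2h+1).$$
   Context: In the paper $\mu$ is the expected-reward function of an arm (indexed by number of pulls), $N$ is the number of pulls of the arm before some round $t\le T$, and $h$ is the window width. *)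

(* Defs.v *)
From Stdlib Require Import Reals Lra Lia.
Open Scope R_scope.

Definition gam (mu : nat -> R) (n : nat) : R := mu (S n) - mu n.

(* sum_{l = a}^{b} f l  (empty, i.e. 0, when b < a) *)
Fixpoint sum_range_aux (f : nat -> R) (a : nat) (k : nat) : R :=
  match k with
  | O => 0
  | S k' => sum_range_aux f a k' + f (a + k')%nat
  end.
Definition sum_range (f : nat -> R) (a b : nat) : R :=
  sum_range_aux f a (S b - a).

Definition mu_tilde (mu : nat -> R) (T N h : nat) : R :=
  / INR h * sum_range
    (fun l => mu l + (INR T - INR l) * ((mu l - mu (l - h)%nat) / INR h))
    (N - h + 1) N.

(* Main.v *)
Require Import Defs.
From Stdlib Require Import Reals Lra Lia.
Open Scope R_scope.

Lemma sum_aux_le (f g : nat -> R) a k :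
  (forall i, (i < k)%nat -> f (a + i)%nat <= g (a + i)%nat) ->
  sum_range_aux f a k <= sum_range_aux g a k.
Proof.
  induction k as [|k IH]; intros H; simpl; [lra|].
  assert (H1 := H k (Nat.lt_succ_diag_r k)).
  assert (sum_range_aux f a k <= sum_range_aux g a k) by (apply IH; intros; apply H; lia).
  lra.
Qed.

Lemma sum_aux_lin c d a k :
  sum_range_aux (fun l => c + d * INR l) a k =
  INR k * c + d * (INR k * INR a + INR k * (INR k - 1) / 2).
Proof.
  induction k as [|k IH]; simpl sum_range_aux.
  - simpl. field.
  - rewrite IH, plus_INR, S_INR. field.
Qed.

Section S.
Variable mu : nat -> R.
Hypothesis Hnn : forall n : nat, 0 <= gam mu n.
Hypothesis Hni : forall n : nat, gam mu (S n) <= gam mu n.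

Lemma gam_anti i j : (i <= j)%nat -> gam mu j <= gam mu i.
Proof.
  induction 1; [lra|]. specialize (Hni m). lra.
Qed.

Lemma incB m k : mu (m + k)%nat - mu m <= INR k * gam mu m.
Proof.
  induction k as [|k IH].
  - rewrite Nat.add_0_r. simpl. lra.
  - rewrite S_INR. replace (m + S k)%nat with (S (m + k)) by lia.
    assert (gam mu (m + k)%nat <= gam mu m) by (apply gam_anti; lia).
    unfold gam in *. lra.
Qed.

Lemma incC m k : INR k * gam mu (m + k)%nat <= mu (m + k)%nat - mu m.
Proof.
  induction k as [|k IH].
  - rewrite Nat.add_0_r. simpl. lra.
  - rewrite S_INR. replace (m + S k)%nat with (S (m + k)) by lia.
    assert (gam mu (S (m + k)) <= gam mu (m + k)%nat) by apply Hni.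
    assert (0 <= INR k) by apply pos_INR.
    assert (INR k * gam mu (S (m + k)) <= INR k * gam mu (m + k)%nat)
      by (apply Rmult_le_compat_l; auto).
    unfold gam in *. lra.
Qed.

Lemma monoD m k : mu m <= mu (m + k)%nat.
Proof.
  assert (H := incC m k). assert (0 <= INR k) by apply pos_INR.
  assert (0 <= INR k * gam mu (m + k)%nat) by (apply Rmult_le_pos; auto). lra.
Qed.
End S.

Theorem lemma5 (mu : nat -> R) (T N h : nat)
  (Hgam_nonneg : forall n : nat, 0 <= gam mu n)
  (Hgam_noninc : forall n : nat, gam mu (S n) <= gam mu n)
  (HN2 : (2 <= N)%nat) (HNT : (N <= T - 1)%nat)
  (Hh1 : (1 <= h)%nat) (Hh2 : (h <= N / 2)%nat) :
  mu T <= mu_tilde mu T N h /\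
  mu_tilde mu T N h - mu T
    <= / 2 * (2 * INR T - 2 * INR N + INR h - 1) * gam mu (N - 2 * h + 1)%nat.
Proof.
  assert (H2h : (2 * h <= N)%nat).
  { assert (2 * (N / 2) <= N)%nat by (apply Nat.Div0.mul_div_le; lia). lia. }
  set (g := gam mu (N - 2 * h + 1)%nat).
  set (E := fun l => mu l + (INR T - INR l) * ((mu l - mu (l - h)%nat) / INR h)).
  assert (hpos : 0 < INR h) by (apply lt_0_INR; lia).
  assert (Hterm : forall l, (N - h + 1 <= l <= N)%nat ->
            mu T <= E l /\ E l <= mu T + g * INR T + (- g) * INR l).
  { intros l Hl. unfold E.
    assert (Hs1 := incC mu Hgam_noninc (l - h) h).
    replace (l - h + h)%nat with l in Hs1 by lia.
    assert (Hs2 := incB mu Hgam_noninc (l - h) h).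
    replace (l - h + h)%nat with l in Hs2 by lia.
    assert (Hb := incB mu Hgam_noninc l (T - l)).
    replace (l + (T - l))%nat with T in Hb by lia.
    assert (Hm := monoD mu Hgam_nonneg Hgam_noninc l (T - l)).
    replace (l + (T - l))%nat with T in Hm by lia.
    rewrite minus_INR in Hb by lia.
    assert (HTl : INR l < INR T) by (apply lt_INR; lia).
    assert (Hga : gam mu (l - h)%nat <= g) by (apply gam_anti; auto; lia).
    set (s := (mu l - mu (l - h)%nat) / INR h).
    assert (Hs_lo : gam mu l <= s).
    { unfold s. apply (Rmult_le_reg_l (INR h)); auto. field_simplify; lra. }
    assert (Hs_hi : s <= g).
    { unfold s. apply (Rmult_le_reg_l (INR h)); auto. field_simplify; nra. }
    split; nra. }
  unfold mu_tilde, sum_range. fold E.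
  replace (S N - (N - h + 1))%nat with h by lia.
  assert (Hlo : sum_range_aux (fun l => mu T + 0 * INR l) (N - h + 1) h
                <= sum_range_aux E (N - h + 1) h).
  { apply sum_aux_le. intros i Hi. rewrite Rmult_0_l, Rplus_0_r.
    apply Hterm; lia. }
  assert (Hhi : sum_range_aux E (N - h + 1) h <=
                sum_range_aux (fun l => (mu T + g * INR T) + (- g) * INR l) (N - h + 1) h).
  { apply sum_aux_le. intros i Hi. apply Hterm; lia. }
  rewrite sum_aux_lin in Hlo. rewrite sum_aux_lin in Hhi.
  replace (INR (N - h + 1)) with (INR N - INR h + 1) in *
    by (rewrite plus_INR, minus_INR by lia; simpl; ring).
  set (S0 := sum_range_aux E (N - h + 1) h) in *.
  split.
  - apply (Rmult_le_reg_l (INR h)); auto. field_simplify; [|lra]. nra.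
  - apply (Rmult_le_reg_l (INR h)); auto.
    replace (INR h * (/ INR h * S0 - mu T)) with (S0 - INR h * mu T) by (field; lra).
    nra.
Qed.
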